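(* Let $g\colon\mathbb{S}^1\to\mathbb{S}^1$ be an orientation-preserving homeomorphism. If $x,y\in Z_1$, then either $d_Z(\iota_1(x),\iota_1(y))=\sigma(x,y)$, or there exist $w,w'\in\mathbb{S}^1$ with $$d_Z(\iota_1(x),\iota_1(y))=\sigma(x,w)+d_Z(\iota_1(w),\iota_1(w'))+\sigma(w',y)\le\sigma(x,y).$$ The corresponding statement holds for $x,y\in Z_2$ (with $\iota_2$). Moreover, if $x\in Z_1$ and $y\in Z_2$, there exist $w,w'\in\mathbb{S}^1$ with $$d_Z(\iota_1(x),\iota_2(y))=\sigma(x,w)+d_Z(\iota_1(w),\iota_1(w'))+\sigma(g(w'),y).$$
   Context: Let $\mathbb{S}^2\subset\mathbb{R}^3$ be the unit sphere with great-circle distance $\sigma$, $\mathbb{S}^1$ the equator, $Z_1,Z_2$ the open southern and northern hemispheres. For an orientation-preserving homeomorphism $g\colon\mathbb{S}^1\to\mathbb{S}^1$, $Z$ is obtained from $\overline Z_1\sqcup\overline Z_2$ by identifying $z\in\mathbb{S}^1\subset\overline Z_1$ with $g(z)\in\mathbb{S}^1\subset\overline Z_2$, with maps $\iota_i\colon\overline Z_i\to Z$. Define $D(x,y)=\infty$ if one point is in $\iota_1(Z_1)$ and the other in $\iota_2(Z_2)$; $D(\iota_1(a),\iota_1(b))=\min\{\sigma(a,b),\sigma(g(a),g(b))\}$ for $a,b\in\mathbb{S}^1$; otherwise $D(x,y)=\sigma(\iota_i^{-1}(x),\iota_i^{-1}(y))$ for the common $i$. $d_Z(x,y)=\inf\sum_{k=1}^nD(x_k,x_{k+1})$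 over finite chains $x=x_1,\dots,x_{n+1}=y$. *)

(* Defs.v *)
From HB Require Import structures.
From mathcomp Require Import all_boot all_order all_algebra.
From mathcomp Require Import all_classical all_reals.
From mathcomp Require Import ereal trigo.
Set Implicit Arguments. Unset Strict Implicit. Unset Printing Implicit Defensive.
Import Order.TTheory GRing.Theory Num.Theory.
Local Open Scope ring_scope.

Section Defs.
Variable R : realType.

Record pt := Pt { px : R; py : R; pz : R }.

Definition dot (p q : pt) : R := px p * px q + py p * py q + pz p * pz q.
Definition dist (p q : pt) : R :=
  Num.sqrt ((px p - px q) ^+ 2 + (py p - py q) ^+ 2 + (pz p - pz q) ^+ 2).

(* unit sphere S^2, equator S^1, open hemispheres Z1 (south), Z2 (north) *)
Definition sphere (p : pt) : Prop := dot p p = 1.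
Definition equator (p : pt) : Prop := sphere p /\ pz p = 0.
Definition south (p : pt) : Prop := sphere p /\ pz p < 0.
Definition north (p : pt) : Prop := sphere p /\ 0 < pz p.

Definition sigma (p q : pt) : R := acos (dot p q).

Definition circle_homeo (g : pt -> pt) : Prop :=
  [/\ (forall a, equator a -> equator (g a)),
      (forall a b, equator a -> equator b -> g a = g b -> a = b),
      (forall b, equator b -> exists2 a, equator a & g a = b),
      (forall a e, equator a -> 0 < e -> exists2 d, 0 < d &
          forall b, equator b -> dist b a < d -> dist (g b) (g a) < e) &
      (forall a e, equator a -> 0 < e -> exists2 d, 0 < d &
          forall b, equator b -> dist (g b) (g a) < d -> dist b a < e)].

(* (a, b, c) on the circle are in counterclockwise cyclic order
   iff the triangle abc is positively oriented *)
Definition ccw (a b c : pt) : Prop :=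
  0 < (px b - px a) * (py c - py a) - (py b - py a) * (px c - px a).

Definition orientation_preserving (g : pt -> pt) : Prop :=
  forall a b c, equator a -> equator b -> equator c ->
    ccw a b c -> ccw (g a) (g b) (g c).

(* Points of Z, by canonical representatives:
   ZS p  = iota_1(p) for p in the closed southern hemisphere (incl. S^1),
   ZN p  = iota_2(p) for p in the open northern hemisphere Z_2.
   (iota_2(w) for w in S^1 equals iota_1(g^-1 w).) *)
Inductive zpt := ZS of pt | ZN of pt.

Definition zvalid (x : zpt) : Prop :=
  match x with
  | ZS p => sphere p /\ pz p <= 0
  | ZN p => north p
  end.

Local Open Scope ereal_scope.

Definition D (g : pt -> pt) (x y : zpt) : \bar R :=
  match x, y with
  | ZS a, ZS b =>
      if (pz a == 0%R) && (pz b == 0%R)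
      then (Num.min (sigma a b) (sigma (g a) (g b)))%:E
      else (sigma a b)%:E
  | ZN a, ZN b => (sigma a b)%:E
  | ZS a, ZN b => if pz a == 0%R then (sigma (g a) b)%:E else +oo
  | ZN a, ZS b => if pz b == 0%R then (sigma a (g b))%:E else +oo
  end.

Fixpoint all_valid (l : seq zpt) : Prop :=
  match l with [::] => True | z :: l' => zvalid z /\ all_valid l' end.

Fixpoint chain_sum (g : pt -> pt) (x : zpt) (l : seq zpt) (y : zpt) : \bar R :=
  match l with
  | [::] => D g x y
  | z :: l' => D g x z + chain_sum g z l' y
  end.

Definition dZ (g : pt -> pt) (x y : zpt) : \bar R :=
  ereal_inf [set s | exists l : seq zpt,
                       all_valid l /\ s = chain_sum g x l y].

End Defs.

(* Main.v *)
Require Import Defs.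
From HB Require Import structures.
From mathcomp Require Import all_boot all_order all_algebra.
From mathcomp Require Import all_classical all_reals.
From mathcomp Require Import ereal topology normedtype derive trigo.
From mathcomp Require Import ring lra.
Import Order.TTheory GRing.Theory Num.Theory.
Import numFieldNormedType.Exports.
Set Implicit Arguments. Unset Strict Implicit. Unset Printing Implicit Defensive.
Local Open Scope classical_set_scope.
Local Open Scope ring_scope.

Section S.
Variable R : realType.
Implicit Types a b c : pt R.

Lemma dotC a b : dot a b = dot b a.
Proof. rewrite /dot; ring. Qed.

Lemma dot_bound a b : sphere a -> sphere b -> -1 <= dot a b <= 1.
Proof.
rewrite /sphere /dot => ha hb.
have h1 : 0 <= (px a - px b)^+2 + (py a - py b)^+2 + (pz a - pz b)^+2.
  by rewrite !addr_ge0 // sqr_ge0.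
have h2 : 0 <= (px a + px b)^+2 + (py a + py b)^+2 + (pz a + pz b)^+2.
  by rewrite !addr_ge0 // sqr_ge0.
apply/andP; split; nra.
Qed.

Lemma sigma_ge0 a b : sphere a -> sphere b -> 0 <= sigma a b.
Proof. by move=> ha hb; apply: acos_ge0; apply: dot_bound. Qed.

Lemma sigma_lepi a b : sphere a -> sphere b -> sigma a b <= pi.
Proof. by move=> ha hb; apply: acos_lepi; apply: dot_bound. Qed.

Lemma sigmaC a b : sigma a b = sigma b a.
Proof. by rewrite /sigma dotC. Qed.

Lemma sigma_id a : sphere a -> sigma a a = 0.
Proof. by rewrite /sigma /sphere => ->; rewrite acos1. Qed.

Lemma gram a b c : sphere a -> sphere b -> sphere c ->
  (dot a c - dot a b * dot b c)^+2 <= (1 - (dot a b)^+2) * (1 - (dot b c)^+2).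
Proof.
rewrite /sphere /dot => ha hb hc.
set det := px a * (py b * pz c - pz b * py c) - py a * (px b * pz c - pz b * px c)
   + pz a * (px b * py c - py b * px c).
set na := px a * px a + py a * py a + pz a * pz a in ha *.
set nb := px b * px b + py b * py b + pz b * pz b in hb *.
set nc := px c * px c + py c * py c + pz c * pz c in hc *.
set p := px a * px b + py a * py b + pz a * pz b.
set q := px b * px c + py b * py c + pz b * pz c.
set r := px a * px c + py a * py c + pz a * pz c.
have E : na * nb * nc + 2 * p * q * r - na * q^+2 - nb * r^+2 - nc * p^+2 = det^+2.
  rewrite /na /nb /nc /p /q /r /det; ring.
rewrite ha hb hc in E.
have : 0 <= det ^+ 2 by apply: sqr_ge0.
rewrite -E => h.
rewrite subr_ge0 in h *.
nra.
Qed.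

Lemma sigma_tri a b c : sphere a -> sphere b -> sphere c ->
  sigma a c <= sigma a b + sigma b c.
Proof.
move=> ha hb hc.
have pb := dot_bound ha hb; have qb := dot_bound hb hc; have rb := dot_bound ha hc.
rewrite /sigma.
set p := dot a b in pb *; set q := dot b c in qb *; set r := dot a c in rb *.
have al0 := acos_ge0 pb; have alpi := acos_lepi pb.
have be0 := acos_ge0 qb; have bepi := acos_lepi qb.
have [hge|hlt] := leP pi (acos p + acos q).
  by apply: le_trans hge; apply: acos_lepi.
have hG := gram ha hb hc; rewrite -/p -/q -/r in hG.
have hcos : cos (acos p + acos q) <= r.
  rewrite cosD !acosK ?sin_acos ?inE //.
  have s1 : 0 <= 1 - p^+2 by nra.
  have s2 : 0 <= 1 - q^+2 by nra.
  rewrite -sqrtrM //.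
  have : `|r - p * q| <= Num.sqrt ((1 - p ^+ 2) * (1 - q ^+ 2)).
    by rewrite -sqrtr_sqr; apply: ler_wsqrtr.
  rewrite ler_norml => /andP[h1 _]; lra.
have gin : acos p + acos q \in `[0, pi].
  by rewrite in_itv /= addr_ge0 //= ltW.
have rin : acos r \in `[0, pi].
  by rewrite in_itv /= acos_ge0 // acos_lepi.
rewrite leNgt; apply/negP => H.
have := H; rewrite -(ltr_cos gin rin) acosK ?inE // => H2.
lra.
Qed.

Lemma equator_sphere a : equator a -> sphere a.
Proof. by case. Qed.

Local Open Scope ereal_scope.

Lemma pinf_add (c : \bar R) : 0 <= c -> +oo + c = +oo.
Proof. by move=> h; rewrite addye //; case: c h. Qed.

Variable g : pt R -> pt R.
Hypothesis geq : forall a, equator a -> equator (g a).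

Lemma D_ge0 x y : zvalid x -> zvalid y -> 0 <= D g x y.
Proof.
case: x => a; case: y => b /=.
- move=> [ha ha0] [hb hb0].
  case: ifP => [/andP[/eqP a0 /eqP b0]|_]; last by rewrite lee_fin sigma_ge0.
  have ea : equator a by []. have eb : equator b by [].
  rewrite lee_fin le_min !sigma_ge0 //; apply: equator_sphere; exact: geq.
- move=> [ha ha0] [hb hb0].
  case: ifP => [/eqP a0|_]; last by rewrite leey.
  have ea : equator a by [].
  by rewrite lee_fin sigma_ge0 //; apply: equator_sphere; exact: geq.
- move=> [ha ha0] [hb hb0].
  case: ifP => [/eqP b0|_]; last by rewrite leey.
  have eb : equator b by [].
  by rewrite lee_fin sigma_ge0 //; apply: equator_sphere; exact: geq.
- move=> [ha ha0] [hb hb0].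
  by rewrite lee_fin sigma_ge0.
Qed.

Lemma chain_ge0 l x y : zvalid x -> all_valid l -> zvalid y -> 0 <= chain_sum g x l y.
Proof.
elim: l x => [|z l IH] x /= hx; first by move=> _; apply: D_ge0.
move=> [hz hl] hy; apply: adde_ge0; first exact: D_ge0.
exact: IH.
Qed.

Lemma chain_cat l1 z l2 x y :
  chain_sum g x (l1 ++ z :: l2) y = chain_sum g x l1 z + chain_sum g z l2 y.
Proof.
elim: l1 x => [|u l1 IH] x //=.
by rewrite IH addeA.
Qed.

Lemma all_valid_cat (l1 l2 : seq (zpt R)) : all_valid l1 -> all_valid l2 -> all_valid (l1 ++ l2).
Proof. by elim: l1 => //= z l1 IH [h1 h2] h; split => //; apply: IH. Qed.

Lemma D_self a : equator a -> D g (ZS a) (ZS a) = 0.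
Proof.
move=> ea; have [_ a0] := ea; rewrite /= a0 eqxx /=.
rewrite !sigma_id //; first by rewrite minxx.
exact/equator_sphere/geq.
by case: ea.
Qed.

Lemma dZ_le l x y : all_valid l -> dZ g x y <= chain_sum g x l y.
Proof. by move=> hl; apply: ereal_inf_lbound; exists l. Qed.

Lemma dZ_ge0 x y : zvalid x -> zvalid y -> 0 <= dZ g x y.
Proof.
move=> hx hy; apply: le_ereal_inf_tmp => s [l [hl ->]].
exact: chain_ge0.
Qed.

Definition e0 : pt R := Pt 1 0 0.
Lemma e0_eq : equator e0.
Proof. by split => //; rewrite /sphere /dot /= mul0r mulr1 !addr0. Qed.


Lemma chain_self a : equator a -> chain_sum g (ZS a) [::] (ZS a) = 0.
Proof. exact: D_self. Qed.

Lemma ple_oo (c : \bar R) l z t : zvalid z -> all_valid l -> zvalid t ->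
  c <= +oo + chain_sum g z l t.
Proof. by move=> hz hl ht; rewrite pinf_add ?leey // chain_ge0. Qed.

Lemma south_valid a : south a -> zvalid (ZS a).
Proof. by case=> h1 h2; split => //; rewrite ltW. Qed.

Lemma zs_cases a : zvalid (ZS a) -> equator a \/ south a.
Proof.
case=> h1; rewrite le_eqVlt => /orP[/eqP h|h]; first by left.
by right.
Qed.


Lemma first_cross_S l x t : all_valid l -> south x -> zvalid t ->
  (exists y, t = ZS y /\ (sigma x y)%:E <= chain_sum g (ZS x) l t) \/
  exists w l2, [/\ equator w, all_valid l2 &
    (sigma x w)%:E + chain_sum g (ZS w) l2 t <= chain_sum g (ZS x) l t].
Proof.
elim: l x => [|z l IH] x /= hl hx ht.
- have x0 : (pz x == 0%R) = false by rewrite lt_eqF //; case: hx.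
  case: t ht => y hy /=; rewrite x0 /=.
    by left; exists y.
  by right; exists e0, [::]; split => //; [exact: e0_eq | rewrite leey].
- have x0 : (pz x == 0%R) = false by rewrite lt_eqF //; case: hx.
  case: hl => hz hl.
  case: z hz => p hp /=; rewrite ?x0 /=; last first.
    by right; exists e0, [::]; split => //; [exact: e0_eq | exact: ple_oo].
  have sx : sphere x by case: hx.
  have sp : sphere p by case: hp.
  case: (zs_cases hp) => [ep|spp].
    by right; exists p, l; split.
  case: (IH p hl spp ht) => [[y [ty hy]]|[w [l2 [ew hl2 hw]]]].
    left; exists y; split => //.
    have sy : sphere y by move: ht; rewrite ty; case.
    apply: le_trans; last exact: leeD2l hy.
    by rewrite -EFinD lee_fin sigma_tri.
  right; exists w, l2; split => //.
  apply: le_trans; last exact: leeD2l hw.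
  rewrite addeA leeD2r // -EFinD lee_fin sigma_tri //.
  exact: equator_sphere.
Qed.

Lemma last_cross_S l s y : all_valid l -> zvalid s -> south y ->
  (exists a, [/\ s = ZS a, south a & (sigma a y)%:E <= chain_sum g s l (ZS y)]) \/
  exists w l1, [/\ equator w, all_valid l1 &
    chain_sum g s l1 (ZS w) + (sigma w y)%:E <= chain_sum g s l (ZS y)].
Proof.
move=> + + hy.
have y0 : (pz y == 0%R) = false by rewrite lt_eqF //; case: hy.
have sy : sphere y by case: hy.
elim: l s => [|z l IH] s /= hl hs.
- case: s hs => a ha /=; rewrite ?y0 ?andbF /=; last first.
    by right; exists e0, [::]; split => //; [exact: e0_eq | rewrite leey].
  case: (zs_cases ha) => [ea|sa].
    right; exists a, [::]; split => //.
    by rewrite chain_self // add0e.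
  by left; exists a.
- case: hl => hz hl.
  case: (IH z hl hz) => [[p [zp sp hp]]|[w [l1 [ew hl1 hw]]]]; last first.
    right; exists w, (z :: l1); split => //=.
    by rewrite -addeA; apply: leeD2l.
  subst z.
  have p0 : (pz p == 0%R) = false by rewrite lt_eqF //; case: sp.
  have ssp : sphere p by case: sp.
  case: s hs => a ha /=; rewrite ?p0 ?andbF /=; last first.
    by right; exists e0, [::]; split => //; [exact: e0_eq | apply: ple_oo => //; apply: south_valid].
  have sa : sphere a by case: ha.
  case: (zs_cases ha) => [ea|sa'].
    right; exists a, [::]; split => //.
    rewrite chain_self // add0e.
    apply: le_trans; last exact: leeD2l hp.
    by rewrite -EFinD lee_fin sigma_tri.
  left; exists a; split => //.
  apply: le_trans; last exact: leeD2l hp.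
  by rewrite -EFinD lee_fin sigma_tri.
Qed.


Lemma north_valid a : north a -> zvalid (ZN a).
Proof. by []. Qed.

Lemma gsphere a : equator a -> sphere (g a).
Proof. by move=> ea; apply/equator_sphere/geq. Qed.

Lemma first_cross_N l x t : all_valid l -> north x -> zvalid t ->
  (exists y, t = ZN y /\ (sigma x y)%:E <= chain_sum g (ZN x) l t) \/
  exists v l2, [/\ equator v, all_valid l2 &
    (sigma x (g v))%:E + chain_sum g (ZS v) l2 t <= chain_sum g (ZN x) l t].
Proof.
have sx0 : forall x : pt R, north x -> sphere x by move=> ? h; case: h.
elim: l x => [|z l IH] x /= hl hx ht.
- case: t ht => y hy /=; last by left; exists y.
  case: (zs_cases hy) => [ey|sy].
    have -> : (pz y == 0%R) by case: ey => _ ->.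
    right; exists y, [::]; split => //.
    by rewrite chain_self // adde0.
  have -> : (pz y == 0%R) = false by rewrite lt_eqF //; case: sy.
  by right; exists e0, [::]; split => //; [exact: e0_eq | rewrite leey].
- case: hl => hz hl.
  case: z hz => p hp /=; last first.
    have sxx := sx0 _ hx; have spp := sx0 _ hp.
    case: (IH p hl hp ht) => [[y [ty hy]]|[w [l2 [ew hl2 hw]]]].
      left; exists y; split => //.
      have sy : sphere y by move: ht; rewrite ty; case.
      apply: le_trans; last exact: leeD2l hy.
      by rewrite -EFinD lee_fin sigma_tri.
    right; exists w, l2; split => //.
    apply: le_trans; last exact: leeD2l hw.
    rewrite addeA leeD2r // -EFinD lee_fin sigma_tri //.
    exact: gsphere.
  case: (zs_cases hp) => [ep|sp].
    have -> : (pz p == 0%R) by case: ep => _ ->.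
    by right; exists p, l; split.
  have -> : (pz p == 0%R) = false by rewrite lt_eqF //; case: sp.
  by right; exists e0, [::]; split => //; [exact: e0_eq | exact: ple_oo].
Qed.

Lemma last_cross_N l s y : all_valid l -> zvalid s -> north y ->
  (exists a, [/\ s = ZN a, north a & (sigma a y)%:E <= chain_sum g s l (ZN y)]) \/
  exists v l1, [/\ equator v, all_valid l1 &
    chain_sum g s l1 (ZS v) + (sigma (g v) y)%:E <= chain_sum g s l (ZN y)].
Proof.
move=> + + hy.
have sy : sphere y by case: hy.
elim: l s => [|z l IH] s /= hl hs.
- case: s hs => a ha /=; last by left; exists a.
  case: (zs_cases ha) => [ea|sa].
    have -> : (pz a == 0%R) by case: ea => _ ->.
    right; exists a, [::]; split => //.
    by rewrite chain_self // add0e.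
  have -> : (pz a == 0%R) = false by rewrite lt_eqF //; case: sa.
  by right; exists e0, [::]; split => //; [exact: e0_eq | rewrite leey].
- case: hl => hz hl.
  case: (IH z hl hz) => [[p [zp sp hp]]|[w [l1 [ew hl1 hw]]]]; last first.
    right; exists w, (z :: l1); split => //=.
    by rewrite -addeA; apply: leeD2l.
  subst z.
  have ssp : sphere p by case: sp.
  case: s hs => a ha /=; last first.
    left; exists a; split => //.
    apply: le_trans; last exact: leeD2l hp.
    by rewrite -EFinD lee_fin sigma_tri //; case: ha.
  case: (zs_cases ha) => [ea|sa'].
    have -> : (pz a == 0%R) by case: ea => _ ->.
    right; exists a, [::]; split => //.
    rewrite chain_self // add0e.
    apply: le_trans; last exact: leeD2l hp.
    by rewrite -EFinD lee_fin sigma_tri //; apply: gsphere.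
  have -> : (pz a == 0%R) = false by rewrite lt_eqF //; case: sa'.
  by right; exists e0, [::]; split => //; [exact: e0_eq | exact: ple_oo].
Qed.

End S.

Section A.
Variable R : realType.
Implicit Types a b c : pt R.

Lemma econtP (f : R -> R) (s : R) :
  (forall eps, 0 < eps -> exists2 d, 0 < d & forall t, `|t - s| < d -> `|f t - f s| < eps)
  -> {for s, continuous f}.
Proof.
move=> H; apply/cvgrPdist_lt => eps e0.
have [d d0 Hd] := H eps e0.
near=> t.
rewrite distrC; apply: Hd.
rewrite distrC.
near: t.
have := nbhsx_ballx s d d0.
apply: filterS => t.
by rewrite /ball /=.
Unshelve. all: by end_near.
Qed.

Lemma contP (f : R -> R) (s : R) : {for s, continuous f} ->
  forall eps, 0 < eps -> exists2 d, 0 < d & forall t, `|t - s| < d -> `|f t - f s| < eps.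
Proof.
move=> /cvgrPdist_lt H eps e0.
have := H eps e0 => /nbhs_ballP [d /= d0 Hd].
exists d => // t ts.
rewrite distrC; apply: Hd.
by rewrite /ball /= distrC.
Qed.

Lemma min2 (H : R -> R -> R) (a b : R) : a <= b ->
  (forall s eps, 0 < eps -> exists2 d, 0 < d &
     forall t t', `|t - s| < d -> `|H t t' - H s t'| < eps) ->
  (forall t s' eps, 0 < eps -> exists2 d, 0 < d &
     forall t', `|t' - s'| < d -> `|H t t' - H t s'| < eps) ->
  exists t0 t0', [/\ t0 \in `[a, b], t0' \in `[a, b] &
    forall t t', t \in `[a, b] -> t' \in `[a, b] -> H t0 t0' <= H t t'].
Proof.
move=> ab H1 H2.
have m : forall t, {c | c \in `[a, b] & forall t', t' \in `[a, b] -> H t c <= H t t'}.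
  move=> t; apply: cid2; apply: EVT_min => //.
  apply: continuous_subspaceT => s; apply: econtP => eps e0.
  exact: H2.
pose K t := H t (projT1 (m t)).
have Kc : {within `[a, b], continuous K}.
  apply: continuous_subspaceT => s; apply: econtP => eps e0.
  have [d d0 Hd] := H1 s eps e0.
  exists d => // t ts.
  rewrite /K; case: (m t) => ct ct1 ct2; case: (m s) => cs cs1 cs2 /=.
  have h1 := Hd t cs ts; have h2 := Hd t ct ts.
  have h3 := ct2 cs cs1; have h4 := cs2 ct ct1.
  rewrite ltr_distl in h1; rewrite ltr_distl in h2.
  rewrite ltr_distl.
  case/andP: h1 => h1a h1b; case/andP: h2 => h2a h2b.
  apply/andP; split; lra.
have [t0 t0in t0min] := EVT_min ab Kc.
exists t0, (projT1 (m t0)); split => //.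
  by case: (m t0).
move=> t t' tin t'in.
apply: le_trans (t0min t tin) _.
rewrite /K; case: (m t) => ct ct1 ct2 /=.
exact: ct2.
Qed.

Definition ept (t : R) : pt R := Pt (cos t) (sin t) 0.

Lemma ept_eq t : equator (ept t).
Proof.
split => //; rewrite /sphere /dot /= mulr0 addr0 -!expr2.
exact: cos2Dsin2.
Qed.

Lemma ept_surj w : equator w -> exists2 t, t \in `[- pi, pi] & w = ept t.
Proof.
case: w => a b c [] /=; rewrite /sphere /dot /= => h c0; subst c.
have hb : b ^+ 2 = 1 - a ^+ 2 by rewrite !expr2; lra.
have ab : -1 <= a <= 1 by apply/andP; split; nra.
have ain : a \in `[-1, 1] by rewrite in_itv /=.
have sq : Num.sqrt (1 - a ^+ 2) = `|b| by rewrite -hb sqrtr_sqr.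
have a0 := acos_ge0 ab; have a1 := acos_lepi ab.
have pi0 : 0 <= pi :> R by apply: pi_ge0.
case: (leP 0 b) => hb0.
  exists (acos a); first by rewrite in_itv /=; apply/andP; split; lra.
  by rewrite /ept acosK // sin_acos // sq ger0_norm.
exists (- acos a); first by rewrite in_itv /=; apply/andP; split; lra.
by rewrite /ept cosN acosK // sinN sin_acos // sq ltr0_norm // opprK.
Qed.

Lemma sigma_small eps : 0 < eps -> exists2 eta, 0 < eta &
  forall p q : pt R, sphere p -> sphere q -> dist p q < eta -> sigma p q < eps.
Proof.
move=> e0.
pose e' := Num.min eps pi.
have pi0 : 0 < pi :> R by apply: pi_gt0.
have e'0 : 0 < e' by rewrite lt_min e0.
have e'pi : e' <= pi by rewrite ge_min lexx orbT.
have e'in : e' \in `[0, pi] by rewrite in_itv /= ltW.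
have in0 : (0 : R) \in `[0, pi] by rewrite in_itv /= lexx ltW.
have c1 : cos e' < 1.
  by rewrite -cos0 (ltr_cos in0 e'in).
exists (Num.sqrt (2 - 2 * cos e')).
  rewrite sqrtr_gt0; lra.
move=> p q; rewrite /sphere /dist => hp hq.
rewrite ltr_sqrt; last lra.
have E : (px p - px q) ^+ 2 + (py p - py q) ^+ 2 + (pz p - pz q) ^+ 2 =
  dot p p + dot q q - 2 * dot p q by rewrite /dot; ring.
rewrite E hp hq => hd.
have hdot : cos e' < dot p q by lra.
have db := dot_bound hp hq.
have din : acos (dot p q) \in `[0, pi].
  by rewrite in_itv /= acos_ge0 // acos_lepi.
have : acos (dot p q) < e'.
  by rewrite -(ltr_cos din e'in) acosK // in_itv /=.
rewrite /sigma => h; apply: lt_le_trans h _.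
by rewrite ge_min lexx.
Qed.

Lemma ept_cont s eta : 0 < eta -> exists2 d, 0 < d &
  forall t, `|t - s| < d -> dist (ept t) (ept s) < eta.
Proof.
move=> eta0.
have c0 : 0 < eta ^+ 2 / 2 by rewrite divr_gt0 // exprn_gt0.
have [d d0 Hd] := contP (@continuous_cos R 0) c0.
exists d => // t ts.
have := Hd (t - s); rewrite subr0 cos0 => /(_ ts) h.
rewrite /dist /ept /=.
rewrite -(ger0_norm (ltW eta0)) -sqrtr_sqr ltr_sqrt ?exprn_gt0 //.
have E : (cos t - cos s) ^+ 2 + (sin t - sin s) ^+ 2 + (0 - 0) ^+ 2 =
  (cos t ^+ 2 + sin t ^+ 2) + (cos s ^+ 2 + sin s ^+ 2) - 2 * (cos t * cos s + sin t * sin s).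
  by ring.
rewrite E !cos2Dsin2 -cosB.
rewrite distrC ltr_distl in h.
case/andP: h => h1 h2.
have : eta ^+ 2 = 2 * (eta ^+ 2 / 2) by field.
lra.
Qed.

End A.


Arguments dZ_le {R g l x y}.

Section M.
Variable R : realType.
Variable g : pt R -> pt R.
Hypothesis hg : circle_homeo g.
Local Open Scope ereal_scope.

Lemma geq : forall a, equator a -> equator (g a).
Proof. by case: hg. Qed.

Definition fd (w w' : pt R) : R := fine (dZ g (ZS w) (ZS w')).

Lemma eq_valid (w : pt R) : equator w -> zvalid (ZS w).
Proof. by case=> h1 h2; split => //; rewrite h2. Qed.

Lemma D_eq_le (a b : pt R) : equator a -> equator b -> D g (ZS a) (ZS b) <= (sigma a b)%:E.
Proof.
move=> [_ a0] [_ b0]; rewrite /= a0 b0 eqxx /=.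
by rewrite lee_fin ge_min lexx.
Qed.

Lemma dZ_fin (w w' : pt R) : equator w -> equator w' -> dZ g (ZS w) (ZS w') = (fd w w')%:E.
Proof.
move=> ew ew'; rewrite fineK //.
have h0 : 0 <= dZ g (ZS w) (ZS w') by apply: (dZ_ge0 geq); apply: eq_valid.
rewrite ge0_fin_numE //.
have h1 : dZ g (ZS w) (ZS w') <= chain_sum g (ZS w) [::] (ZS w') by apply: dZ_le.
apply: le_lt_trans h1 _.
apply: le_lt_trans (D_eq_le ew ew') _.
exact: ltry.
Qed.

Lemma fd_ge0 (w w' : pt R) : equator w -> equator w' -> (0 <= fd w w')%R.
Proof. by move=> ew ew'; rewrite -lee_fin -dZ_fin //; apply: (dZ_ge0 geq); exact: eq_valid. Qed.

Lemma inf_shift (S : set (\bar R)) (c : \bar R) (r : R) :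
  (forall s, S s -> c <= r%:E + s) -> c <= r%:E + ereal_inf S.
Proof.
move=> H; rewrite addeC -leeBlDr //; apply: le_ereal_inf_tmp => s Ss.
by rewrite leeBlDr // addeC; exact: H.
Qed.

Lemma chain_mid x0 y0 (w w' : pt R) l :
  chain_sum g x0 (ZS w :: l ++ [:: ZS w']) y0 =
  D g x0 (ZS w) + chain_sum g (ZS w) l (ZS w') + D g (ZS w') y0.
Proof. by rewrite -cat_cons chain_cat. Qed.

Lemma dZ_upper x0 y0 (w w' : pt R) (a b : R) : equator w -> equator w' ->
  D g x0 (ZS w) = a%:E -> D g (ZS w') y0 = b%:E ->
  dZ g x0 y0 <= a%:E + dZ g (ZS w) (ZS w') + b%:E.
Proof.
move=> ew ew' ha hb.
rewrite -addeA (addeC _ b%:E) addeA -EFinD.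
apply: inf_shift => s [l [hl ->]].
apply: le_trans (dZ_le (l := ZS w :: l ++ [:: ZS w']) _) _.
  split; first exact: eq_valid.
  by apply: all_valid_cat => //; split => //; exact: eq_valid.
rewrite chain_mid ha hb EFinD.
by rewrite -addeA (addeC _ b%:E) addeA.
Qed.

Lemma fd_triL (a b c : pt R) : equator a -> equator b -> equator c ->
  (fd a c <= sigma a b + fd b c)%R.
Proof.
move=> ea eb ec; rewrite -lee_fin EFinD -!dZ_fin //.
apply: inf_shift => s [l [hl ->]].
apply: le_trans (dZ_le (l := ZS b :: l) _) _.
  by split => //; exact: eq_valid.
by rewrite [chain_sum _ _ (_ :: _) _]/=; apply: leeD2r; apply: D_eq_le.
Qed.

Lemma fd_triR (a b c : pt R) : equator a -> equator b -> equator c ->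
  (fd a c <= fd a b + sigma b c)%R.
Proof.
move=> ea eb ec; rewrite -lee_fin EFinD -!dZ_fin // addeC.
apply: inf_shift => s [l [hl ->]].
apply: le_trans (dZ_le (l := l ++ [:: ZS b]) _) _.
  by apply: all_valid_cat => //; split => //; exact: eq_valid.
rewrite chain_cat [chain_sum _ _ [::] _]/= addeC.
by apply: leeD2r; apply: D_eq_le.
Qed.

Lemma fd_lipL (a b c : pt R) : equator a -> equator b -> equator c ->
  (`|fd a c - fd b c| <= sigma a b)%R.
Proof.
move=> ea eb ec.
have h1 := fd_triL ea eb ec; have h2 := fd_triL eb ea ec.
rewrite sigmaC in h2.
rewrite ler_norml; apply/andP; split; lra.
Qed.

Lemma fd_lipR (a b c : pt R) : equator a -> equator b -> equator c ->
  (`|fd a b - fd a c| <= sigma b c)%R.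
Proof.
move=> ea eb ec.
have h1 := fd_triR ea eb ec; have h2 := fd_triR ea ec eb.
rewrite sigmaC in h2.
rewrite ler_norml; apply/andP; split; lra.
Qed.

Lemma sigma_lip (x p q : pt R) : sphere x -> sphere p -> sphere q ->
  (`|sigma x p - sigma x q| <= sigma p q)%R.
Proof.
move=> hx hp hq.
have h1 := sigma_tri hx hq hp; have h2 := sigma_tri hx hp hq.
rewrite (sigmaC q p) in h1.
rewrite ler_norml; apply/andP; split; lra.
Qed.

Definition hcont (h : pt R -> pt R) :=
  (forall w, equator w -> equator (h w)) /\
  (forall s eps, (0 < eps)%R -> exists2 d, (0 < d)%R &
     forall t, (`|t - s| < d)%R -> (sigma (h (ept t)) (h (ept s)) < eps)%R).

Lemma hcont_id : hcont id.
Proof.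
split => // s eps e0.
have [eta eta0 Heta] := sigma_small e0.
have [d d0 Hd] := ept_cont s eta0.
exists d => // t ts.
apply: Heta; try exact/equator_sphere/ept_eq.
exact: Hd.
Qed.

Lemma hcont_g : hcont g.
Proof.
split; first exact: geq.
move=> s eps e0.
have [eta eta0 Heta] := sigma_small e0.
case: hg => _ _ _ gc _.
have [d1 d10 Hd1] := gc (ept s) eta (ept_eq s) eta0.
have [d d0 Hd] := ept_cont s d10.
exists d => // t ts.
apply: Heta; try exact/equator_sphere/geq/ept_eq.
apply: Hd1; first exact: ept_eq.
exact: Hd.
Qed.

Lemma minimizer (x y : pt R) hA hB : sphere x -> sphere y -> hcont hA -> hcont hB ->
  exists w0 w0', [/\ equator w0, equator w0' & forall w w', equator w -> equator w' ->
    (sigma x (hA w0) + fd w0 w0' + sigma y (hB w0') <=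
     sigma x (hA w) + fd w w' + sigma y (hB w'))%R].
Proof.
move=> sx sy [hAe hAc] [hBe hBc].
pose F w w' := (sigma x (hA w) + fd w w' + sigma y (hB w'))%R.
have hpi : (- pi <= pi :> R)%R by have := @pi_ge0 R; lra.
have H1 : forall s eps, (0 < eps)%R -> exists2 d, (0 < d)%R &
    forall t t', (`|t - s| < d)%R -> (`|F (ept t) (ept t') - F (ept s) (ept t')| < eps)%R.
  move=> s eps e0.
  have e2 : (0 < eps / 2)%R by rewrite divr_gt0.
  have [d1 d10 Hd1] := hAc s _ e2.
  have [d2 d20 Hd2] := hcont_id.2 s _ e2.
  exists (Num.min d1 d2); first by rewrite lt_min d10.
  move=> t t'; rewrite lt_min => /andP[h1 h2].
  have a1 := Hd1 t h1; have a2 := Hd2 t h2.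
  have b1 := sigma_lip sx (equator_sphere (hAe _ (ept_eq t))) (equator_sphere (hAe _ (ept_eq s))).
  have b2 := fd_lipL (ept_eq t) (ept_eq s) (ept_eq t').
  rewrite /F /=.
  move: b1 b2 a1 a2; rewrite /=.
  set A1 := sigma x (hA (ept t)); set A2 := sigma x (hA (ept s)).
  set f1 := fd (ept t) (ept t'); set f2 := fd (ept s) (ept t').
  set S1 := sigma _ _; set S2 := sigma (ept t) (ept s).
  rewrite !ler_norml => /andP[b1 b1'] /andP[b2 b2'] a1 a2.
  rewrite ltr_norml; apply/andP; split; lra.
have H2 : forall t s' eps, (0 < eps)%R -> exists2 d, (0 < d)%R &
    forall t', (`|t' - s'| < d)%R -> (`|F (ept t) (ept t') - F (ept t) (ept s')| < eps)%R.
  move=> t s' eps e0.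
  have e2 : (0 < eps / 2)%R by rewrite divr_gt0.
  have [d1 d10 Hd1] := hBc s' _ e2.
  have [d2 d20 Hd2] := hcont_id.2 s' _ e2.
  exists (Num.min d1 d2); first by rewrite lt_min d10.
  move=> t'; rewrite lt_min => /andP[h1 h2].
  have a1 := Hd1 t' h1; have a2 := Hd2 t' h2.
  have b1 := sigma_lip sy (equator_sphere (hBe _ (ept_eq t'))) (equator_sphere (hBe _ (ept_eq s'))).
  have b2 := fd_lipR (ept_eq t) (ept_eq t') (ept_eq s').
  rewrite /F /=.
  move: b1 b2 a1 a2; rewrite /=.
  set A1 := sigma y (hB (ept t')); set A2 := sigma y (hB (ept s')).
  set f1 := fd (ept t) (ept t'); set f2 := fd (ept t) (ept s').
  set S1 := sigma _ _; set S2 := sigma (ept t') (ept s').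
  rewrite !ler_norml => /andP[b1 b1'] /andP[b2 b2'] a1 a2.
  rewrite ltr_norml; apply/andP; split; lra.
have [t0 [t0' [t0in t0'in Hm]]] := @min2 R (fun t t' => F (ept t) (ept t')) _ _ hpi H1 H2.
exists (ept t0), (ept t0'); split; try exact: ept_eq.
  move=> w w' ew ew'.
  have [t tin ->] := ept_surj ew; have [t' t'in ->] := ept_surj ew'.
  exact: Hm.
Qed.

Lemma combine x0 y0 (base m : R) :
  (forall l, all_valid l -> base%:E <= chain_sum g x0 l y0 \/ m%:E <= chain_sum g x0 l y0) ->
  dZ g x0 y0 <= base%:E -> dZ g x0 y0 <= m%:E ->
  dZ g x0 y0 = (Num.min base m)%:E.
Proof.
move=> H hb hm; apply/le_anti/andP; split.
  by have [h|h] := leP base m.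
apply: le_ereal_inf_tmp => s [l [hl ->]].
by case: (H l hl) => h; apply: le_trans h; rewrite lee_fin ge_min lexx ?orbT.
Qed.

End M.

Lemma chain_bound (R : realType) (m A f B : R) (C1 C2 C : \bar R) :
  (m <= A + f + B)%R -> (f%:E <= C1)%E -> (C1 + B%:E <= C2)%E -> (A%:E + C2 <= C)%E ->
  (m%:E <= C)%E.
Proof.
move=> h1 h2 h3 h4; apply: le_trans h4.
apply: le_trans (leeD2l _ h3).
rewrite addeA.
apply: le_trans (leeD2r _ (leeD2l _ h2)).
by rewrite -!EFinD lee_fin.
Qed.

Local Open Scope ereal_scope.

Theorem lemma3p2 (R : realType) (g : pt R -> pt R) :
  circle_homeo g -> orientation_preserving g ->
  [/\ (forall x y : pt R, south x -> south y ->
         dZ g (ZS x) (ZS y) = (sigma x y)%:E \/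
         exists w w' : pt R, [/\ equator w, equator w',
           dZ g (ZS x) (ZS y) =
             (sigma x w)%:E + dZ g (ZS w) (ZS w') + (sigma w' y)%:E &
           dZ g (ZS x) (ZS y) <= (sigma x y)%:E]),
      (* Z_2 case: w = g v, w' = g v' range over S^1, and iota_2(g v) = iota_1(v) *)
      (forall x y : pt R, north x -> north y ->
         dZ g (ZN x) (ZN y) = (sigma x y)%:E \/
         exists v v' : pt R, [/\ equator v, equator v',
           dZ g (ZN x) (ZN y) =
             (sigma x (g v))%:E + dZ g (ZS v) (ZS v') + (sigma (g v') y)%:E &
           dZ g (ZN x) (ZN y) <= (sigma x y)%:E]) &
      (forall x y : pt R, south x -> north y ->
         exists w w' : pt R, [/\ equator w, equator w' &
           dZ g (ZS x) (ZN y) =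
             (sigma x w)%:E + dZ g (ZS w) (ZS w') + (sigma (g w') y)%:E])].
Proof.
move=> hg _.
have ge := geq hg.
have hcg := hcont_g hg.
have hci := @hcont_id R.
have fdle : forall w w' l, equator w -> equator w' -> all_valid l ->
    (fd g w w')%:E <= chain_sum g (ZS w) l (ZS w').
  by move=> w w' l ew ew' hl; rewrite -dZ_fin //; apply: dZ_le.
have eq0 : forall w : pt R, equator w -> (pz w == 0%R) = true.
  by move=> w [_ ->]; rewrite eqxx.
split.
- move=> x y hx hy.
  have sx : sphere x by case: hx.
  have sy : sphere y by case: hy.
  have x0 : (pz x == 0%R) = false by rewrite lt_eqF //; case: hx.
  have y0 : (pz y == 0%R) = false by rewrite lt_eqF //; case: hy.
  have [w0 [w0' [ew0 ew0' Hm]]] := minimizer hg sx sy hci hci.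
  have E : dZ g (ZS x) (ZS y) =
      (Num.min (sigma x y) (sigma x w0 + fd g w0 w0' + sigma y w0'))%:E.
    apply: combine.
    + move=> l hl.
      case: (first_cross_S ge hl hx (south_valid hy)) => [[y' [[<-] h]]|[w [l2 [ew hl2 hw]]]].
        by left.
      right.
      case: (last_cross_S ge hl2 (eq_valid ew) hy) => [[a [[<-] sa _]]|[w' [l1 [ew' hl1 hw']]]].
        by case: ew => _ h0; case: sa => _; rewrite h0 ltxx.
      apply: (chain_bound _ (fdle _ _ _ ew ew' hl1) hw' hw).
      by have := Hm w w' ew ew'; rewrite /= (sigmaC y w').
    + by have := @dZ_le R g [::] (ZS x) (ZS y) I; rewrite /= x0.
    + apply: le_trans (dZ_upper (a := sigma x w0) (b := sigma w0' y) ew0 ew0' _ _) _.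
      * by rewrite /= x0.
      * by rewrite /= y0 andbF.
      * by rewrite dZ_fin // -!EFinD lee_fin (sigmaC y w0').
  move: E; have [h|h] := leP (sigma x y) (sigma x w0 + fd g w0 w0' + sigma y w0')%R => E.
    by left.
  right; exists w0, w0'; split => //.
    by rewrite E dZ_fin // -!EFinD (sigmaC y w0').
  by rewrite E lee_fin ltW.
- move=> x y hx hy.
  have sx : sphere x by case: hx.
  have sy : sphere y by case: hy.
  have [w0 [w0' [ew0 ew0' Hm]]] := minimizer hg sx sy hcg hcg.
  have E : dZ g (ZN x) (ZN y) =
      (Num.min (sigma x y) (sigma x (g w0) + fd g w0 w0' + sigma y (g w0')))%:E.
    apply: combine.
    + move=> l hl.
      case: (first_cross_N ge hl hx (north_valid hy)) => [[y' [[<-] h]]|[w [l2 [ew hl2 hw]]]].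
        by left.
      right.
      case: (last_cross_N ge hl2 (eq_valid ew) hy) => [[a [ha _ _]]|[w' [l1 [ew' hl1 hw']]]].
        by [].
      apply: (chain_bound _ (fdle _ _ _ ew ew' hl1) hw' hw).
      by have := Hm w w' ew ew'; rewrite (sigmaC y (g w')).
    + by have := @dZ_le R g [::] (ZN x) (ZN y) I.
    + apply: le_trans (dZ_upper (a := sigma x (g w0)) (b := sigma (g w0') y) ew0 ew0' _ _) _.
      * by rewrite /= eq0.
      * by rewrite /= eq0.
      * by rewrite dZ_fin // -!EFinD lee_fin (sigmaC y (g w0')).
  move: E; have [h|h] := leP (sigma x y) (sigma x (g w0) + fd g w0 w0' + sigma y (g w0'))%R => E.
    by left.
  right; exists w0, w0'; split => //.
    by rewrite E dZ_fin // -!EFinD (sigmaC y (g w0')).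
  by rewrite E lee_fin ltW.
- move=> x y hx hy.
  have sx : sphere x by case: hx.
  have sy : sphere y by case: hy.
  have x0 : (pz x == 0%R) = false by rewrite lt_eqF //; case: hx.
  have [w0 [w0' [ew0 ew0' Hm]]] := minimizer hg sx sy hci hcg.
  have E : dZ g (ZS x) (ZN y) = (Num.min (sigma x w0 + fd g w0 w0' + sigma y (g w0'))
     (sigma x w0 + fd g w0 w0' + sigma y (g w0')))%:E.
    apply: combine.
    + move=> l hl.
      case: (first_cross_S ge hl hx (north_valid hy)) => [[y' [hy' h]]|[w [l2 [ew hl2 hw]]]].
        by [].
      right.
      case: (last_cross_N ge hl2 (eq_valid ew) hy) => [[a [ha _ _]]|[w' [l1 [ew' hl1 hw']]]].
        by [].
      apply: (chain_bound _ (fdle _ _ _ ew ew' hl1) hw' hw).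
      by have := Hm w w' ew ew'; rewrite (sigmaC y (g w')).
    + apply: le_trans (dZ_upper (a := sigma x w0) (b := sigma (g w0') y) ew0 ew0' _ _) _.
      * by rewrite /= x0.
      * by rewrite /= eq0.
      * by rewrite dZ_fin // -!EFinD lee_fin (sigmaC y (g w0')).
    + apply: le_trans (dZ_upper (a := sigma x w0) (b := sigma (g w0') y) ew0 ew0' _ _) _.
      * by rewrite /= x0.
      * by rewrite /= eq0.
      * by rewrite dZ_fin // -!EFinD lee_fin (sigmaC y (g w0')).
  exists w0, w0'; split => //.
  by rewrite E minxx dZ_fin // -!EFinD (sigmaC y (g w0')).
Qed.
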